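(* Let $\mathcal K$ (UAVs) and $\mathcal I$ (subscribers) be finite sets. Fix $\sigma^2>0$, channel gains $h_{ij}>0$ ($i\in\mathcal I$, $j\in\mathcal K$), association indicators $c_{ik}\in\{0,1\}$ with $\sum_{k}c_{ik}\le1$ for all $i$ and $\sum_i c_{ik}\le 1$ for all $k$, constants $L>0$, $B>0$, $V\rho_1\ge 0$, nonnegative weights $a_i$ ($i\in\mathcal I$) and $w_k$ ($k\in\mathcal K$), and power bounds $0\le p^{\min}_k$, $p^c_k\ge 0$, $\hat p_k$. For $p=(p_k)_{k\in\mathcal K}$ let $$r_i(p)=\sum_{k\in\mathcal K}c_{ik}\log_2\Big(1+\frac{p_kh_{ik}}{\sigma^2+\sum_{j\in\mathcal K\setminus\{k\}}p_jh_{ij}}\Big),$$ and let $\mathcal F=\{p:\ p^{\min}_k\le p_k\le \hat p_k-p^c_k\ \forall k\}$. Problem (P): minimize over $p\in\mathcal F$ the function $\Phi(p)=\sum_{k}w_kp_k+V\rho_1\sum_{i}\frac{L}{B\,r_i(p)}-\sum_i a_i r_i(p)$ (with $L/(B\cdot 0)=+\infty$); let $\mathrm{OPT}_P=\inf_{p\in\mathcal F}\Phi(p)$. Fix a local point $p^{(r)}\ge 0$ and define $\hat\Lambda_i(p)=\log_2(\sigma^2+\sum_{j}p_jh_{ij})$, $F^{(r)}_{ik}=\log_2(\sigma^2+\sum_{j\ne k}p^{(r)}_jh_{ij})$, $G^{(r)}_{ikj}=h_{ij}/\big((\sigma^2+\sum_{l\ne k}p^{(r)}_lh_{il})\ln2\big)$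 for $j\ne k$. Problem (C): maximize over $(p,\xi,\eta)$, $\xi=(\xi_i)_{i\in\mathcal I}$, $\eta=(\eta_i)_{i\in\mathcal I}$, the objective $-\sum_k w_kp_k+\sum_i a_i\eta_i-V\rho_1\sum_i\xi_i$ subject to: $p\in\mathcal F$; $\xi_i\ge0,\ \eta_i\ge 0$ and $\xi_i\eta_i\ge L/B$ for all $i$; and for all $i$, $$\sum_{k}c_{ik}\big(\hat\Lambda_i(p)-F^{(r)}_{ik}\big)-\sum_k c_{ik}\sum_{j\ne k}G^{(r)}_{ikj}(p_j-p^{(r)}_j)\ge\eta_i .$$ Let $\mathrm{OPT}_C$ be the supremum of the objective of (C) over its feasible set ($-\infty$ if infeasible). Then $\mathrm{OPT}_P\le -\mathrm{OPT}_C$, i.e., the negative of the optimal value of (C) is an upper bound on the optimal value of (P).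
   Context: Problem (P) is the per-slot UAV transmit-power subproblem of a Lyapunov drift-plus-penalty scheme for multi-UAV video transmission: in the paper $w_k=V\rho_2+[Y_k(t)]^+$ and $a_i=[X_i(t)]^++[Z_i(t)]^+$ with $V,\rho_1,\rho_2\ge0$ and $[x]^+=\max\{x,0\}$, $L$ is the video data length per slot and $B$ the bandwidth; $r_i(p)$ is the achievable rate of subscriber $i$ under the fixed association $c$ and fixed UAV positions (encoded in $h_{ij}$). *)

(* Defs.v *)
From HB Require Import structures.
From mathcomp Require Import all_boot all_order all_algebra.
From mathcomp Require Import all_classical all_reals all_analysis.
Set Implicit Arguments. Unset Strict Implicit. Unset Printing Implicit Defensive.
Import Order.TTheory GRing.Theory Num.Theory.
Local Open Scope ring_scope.
Local Open Scope classical_set_scope.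

Section UAV.
Variables (R : realType) (K I : finType).

Definition log2 (x : R) : R := ln x / ln 2.

Definition rate (sigma2 : R) (h : I -> K -> R) (c : I -> K -> R)
  (p : K -> R) (i : I) : R :=
  \sum_(k : K) c i k *
    log2 (1 + p k * h i k / (sigma2 + \sum_(j : K | j != k) p j * h i j)).

Definition feasP (pmin pc phat : K -> R) (p : K -> R) : Prop :=
  forall k, pmin k <= p k <= phat k - pc k.

Definition delay_term (L B r : R) : \bar R :=
  if r == 0 then +oo%E else (L / (B * r))%:E.

Definition PhiP (sigma2 : R) (h c : I -> K -> R) (L B Vrho1 : R)
  (a : I -> R) (w : K -> R) (p : K -> R) : \bar R :=
  ((\sum_(k : K) w k * p k)%:E
   + Vrho1%:E * (\sum_(i : I) delay_term L B (rate sigma2 h c p i))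
   - (\sum_(i : I) a i * rate sigma2 h c p i)%:E)%E.

Definition OPT_P sigma2 h c L B Vrho1 a w (pmin pc phat : K -> R) : \bar R :=
  ereal_inf [set PhiP sigma2 h c L B Vrho1 a w p | p in feasP pmin pc phat].

Definition LamHat (sigma2 : R) (h : I -> K -> R) (p : K -> R) (i : I) : R :=
  log2 (sigma2 + \sum_(j : K) p j * h i j).

Definition Fr (sigma2 : R) (h : I -> K -> R) (pr : K -> R) (i : I) (k : K) : R :=
  log2 (sigma2 + \sum_(j : K | j != k) pr j * h i j).

Definition Gr (sigma2 : R) (h : I -> K -> R) (pr : K -> R) (i : I) (k j : K) : R :=
  h i j / ((sigma2 + \sum_(l : K | l != k) pr l * h i l) * ln 2).

Definition objC (Vrho1 : R) (a : I -> R) (w : K -> R)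
  (p : K -> R) (xi eta : I -> R) : R :=
  - (\sum_(k : K) w k * p k) + \sum_(i : I) a i * eta i
  - Vrho1 * \sum_(i : I) xi i.

Definition feasC (sigma2 : R) (h c : I -> K -> R) (L B : R)
  (pmin pc phat pr : K -> R) (p : K -> R) (xi eta : I -> R) : Prop :=
  feasP pmin pc phat p /\
  (forall i, 0 <= xi i /\ 0 <= eta i /\ L / B <= xi i * eta i) /\
  (forall i,
     eta i <= \sum_(k : K) c i k * (LamHat sigma2 h p i - Fr sigma2 h pr i k)
              - \sum_(k : K) c i k *
                  \sum_(j : K | j != k) Gr sigma2 h pr i k j * (p j - pr j)).

Definition OPT_C sigma2 h c L B Vrho1 a w (pmin pc phat pr : K -> R) : \bar R :=
  ereal_sup [set (objC Vrho1 a w x.1.1 x.1.2 x.2)%:E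
            | x in [set x : (K -> R) * (I -> R) * (I -> R) |
                    feasC sigma2 h c L B pmin pc phat pr x.1.1 x.1.2 x.2]].

End UAV.

(* Main.v *)
Require Import Defs.
From HB Require Import structures.
From mathcomp Require Import all_boot all_order all_algebra.
From mathcomp Require Import all_classical all_reals all_analysis.
From mathcomp Require Import ring lra.
Import Order.TTheory GRing.Theory Num.Theory.
Local Open Scope ring_scope.

Lemma ln_conc (R : realType) (X Y : R) : 0 < X -> 0 < Y -> ln X <= ln Y + (X - Y) / Y.
Proof.
move=> X0 Y0.
have -> : ln X = ln Y + ln (1 + (X - Y) / Y).
  have -> : 1 + (X - Y) / Y = X / Y by field; rewrite gt_eqF.
  rewrite ln_div ?posrE //; lra.
rewrite lerD2l; apply: le_ln1Dx.
have : 0 < X / Y by rewrite divr_gt0.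
have -> : X / Y = 1 + (X - Y) / Y by field; rewrite gt_eqF.
lra.
Qed.

Lemma term_bound (R : realType) (K I : finType) (sigma2 : R) (h : I -> K -> R)
  (p pr : K -> R) (i : I) (k : K) :
  0 < sigma2 -> (forall i j, 0 < h i j) -> (forall k, 0 <= p k) -> (forall k, 0 <= pr k) ->
  (LamHat sigma2 h p i - Fr sigma2 h pr i k)
    - \sum_(j : K | j != k) Gr sigma2 h pr i k j * (p j - pr j)
  <= log2 (1 + p k * h i k / (sigma2 + \sum_(j : K | j != k) p j * h i j)).
Proof.
move=> hs hh hp hpr.
set S := sigma2 + \sum_(j : K | j != k) p j * h i j.
set Sr := sigma2 + \sum_(j : K | j != k) pr j * h i j.
have S0 : 0 < S.
  rewrite /S; apply: ltr_pwDl => //; apply: sumr_ge0 => j _; apply: mulr_ge0 => //; exact: ltW.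
have Sr0 : 0 < Sr.
  rewrite /Sr; apply: ltr_pwDl => //; apply: sumr_ge0 => j _; apply: mulr_ge0 => //; exact: ltW.
have pk0 : 0 <= p k * h i k by apply: mulr_ge0 => //; exact: ltW.
have ln20 : 0 < ln (2:R) by apply: ln_gt0; lra.
have HT : sigma2 + \sum_(j : K) p j * h i j = S + p k * h i k.
  rewrite (bigD1 k) //= /S; lra.
have HG : \sum_(j : K | j != k) Gr sigma2 h pr i k j * (p j - pr j) = (S - Sr) / (Sr * ln 2).
  rewrite /Gr /S /Sr.
  have -> : sigma2 + \sum_(j | j != k) p j * h i j - (sigma2 + \sum_(j | j != k) pr j * h i j)
     = \sum_(j | j != k) h i j * (p j - pr j).
    rewrite opprD addrACA subrr add0r -sumrB; apply: eq_bigr => j _; ring.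
  rewrite mulr_suml; apply: eq_bigr => j _; rewrite -/Sr; field.
  by rewrite !gt_eqF.
rewrite HG /LamHat /Fr -/Sr HT /log2.
have -> : 1 + p k * h i k / S = (S + p k * h i k) / S by field; rewrite gt_eqF.
rewrite ln_div ?posrE //; last by lra.
have := @ln_conc R S Sr S0 Sr0.
set A := ln (S + p k * h i k). set lS := ln S. set lSr := ln Sr.
move=> H.
have -> : (S - Sr) / (Sr * ln 2) = ((S - Sr) / Sr) / ln 2 by field; rewrite !gt_eqF.
rewrite -!mulrBl ler_pM2r ?invr_gt0 //; lra.
Qed.

Theorem lemma1 (R : realType) (K I : finType)
  (sigma2 : R) (h c : I -> K -> R) (L B Vrho1 : R)
  (a : I -> R) (w : K -> R) (pmin pc phat pr : K -> R)
  (hsigma : 0 < sigma2)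
  (hh : forall i j, 0 < h i j)
  (hc01 : forall i k, c i k = 0 \/ c i k = 1)
  (hcI : forall i, \sum_(k : K) c i k <= 1)
  (hcK : forall k, \sum_(i : I) c i k <= 1)
  (hL : 0 < L) (hB : 0 < B) (hV : 0 <= Vrho1)
  (ha : forall i, 0 <= a i) (hw : forall k, 0 <= w k)
  (hpmin : forall k, 0 <= pmin k) (hpc : forall k, 0 <= pc k)
  (hpr : forall k, 0 <= pr k) :
  (OPT_P sigma2 h c L B Vrho1 a w pmin pc phat
   <= - OPT_C sigma2 h c L B Vrho1 a w pmin pc phat pr)%E.
Proof.
rewrite /OPT_P /OPT_C leeNr.
apply: ge_ereal_sup => _ [[[p xi] eta] /= [Hp [Hxe Heta]] <-].
rewrite leeNr; apply: ge_ereal_inf.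
exists (PhiP sigma2 h c L B Vrho1 a w p); first by exists p.
have p0 : forall k, 0 <= p k.
  by move=> k; case/andP: (Hp k) => H _; exact: le_trans (hpmin k) H.
have c0 : forall i k, 0 <= c i k by move=> i k; case: (hc01 i k) => ->.
have Hr : forall i, eta i <= rate sigma2 h c p i.
  move=> i; apply: le_trans (Heta i) _.
  rewrite -sumrB /rate; apply: ler_sum => k _.
  rewrite -mulrBr; apply: ler_wpM2l => //; exact: term_bound.
have eta0 : forall i, 0 < eta i.
  move=> i; have [xi0 [e0 Hle]] := Hxe i.
  have LB0 : 0 < L / B by rewrite divr_gt0.
  rewrite lt_def e0 andbT; apply/eqP => E; move: Hle; rewrite E mulr0; lra.
have r0 : forall i, 0 < rate sigma2 h c p i by move=> i; exact: lt_le_trans (eta0 i) (Hr i).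
have Hd : (\sum_(i : I) delay_term L B (rate sigma2 h c p i))%E
          = (\sum_(i : I) L / (B * rate sigma2 h c p i))%:E.
  rewrite -sumEFin; apply: eq_bigr => i _; by rewrite /delay_term gt_eqF.
have Hx : \sum_(i : I) L / (B * rate sigma2 h c p i) <= \sum_(i : I) xi i.
  apply: ler_sum => i _; have [xi0 [e0 Hle]] := Hxe i.
  have ri := r0 i; have ei := eta0 i; have Ri := Hr i.
  rewrite ler_pdivrMr ?mulr_gt0 //.
  move: Hle; rewrite ler_pdivrMr // => Hle.
  apply: le_trans Hle _; rewrite [B * _]mulrC mulrA ler_wpM2r ?ler_wpM2l //; lra.
have Ha : \sum_(i : I) a i * eta i <= \sum_(i : I) a i * rate sigma2 h c p i.
  by apply: ler_sum => i _; apply: ler_wpM2l.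
have HV := ler_wpM2l hV Hx.
rewrite /PhiP Hd -EFinM -EFinD -EFinN lee_fin /objC.
move: HV Ha.
set W := \sum_(k : K) w k * p k.
set X := \sum_(i : I) L / _.
set X' := \sum_(i : I) xi i.
set Ae := \sum_(i : I) a i * eta i.
set Ar := \sum_(i : I) a i * _.
clearbody W X X' Ae Ar => HV Ha.
lra.
Qed.
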